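(* Let $\mathcal H$ be a complex Hilbert space, $T\in\mathcal B(\mathcal H)$ left-invertible, and $L\in\mathcal B(\mathcal H)$ a left-inverse of $T$ (i.e. $LT=I$). Let $\phi(z)=1/z$ on $\mathbb C\setminus\{0\}$, extended to the Riemann sphere by $\phi(0)=\infty$, $\phi(\infty)=0$. Then, if $0\in\sigma(T)$, $$\mathbb C\setminus\phi(\sigma_l(L))\subseteq\sigma_r(T)\setminus\sigma_l(T),$$ while if $0\notin\sigma(T)$, then $\phi(\sigma(L))=\sigma(T)$. In either case $0\notin\partial\sigma(L)$ and $\phi(\partial\sigma(L))\subseteq\sigma_r(T)$.
   Context: $\sigma(A)$ is the spectrum of $A$; $\sigma_l(A)$ (left spectrum) is the set of $\lambda\in\mathbb C$ with $A-\lambda I$ not left-invertible, and $\sigma_r(A)$ (right spectrum) the set of $\lambda$ with $A-\lambda I$ not right-invertible. $\partial$ denotes topological boundary in $\mathbb C$. *)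

(* Defs.v *)
From mathcomp Require Import all_boot all_order all_algebra.
From mathcomp Require Import complex.
From mathcomp Require Import all_classical all_reals all_analysis.
Import Order.TTheory GRing.Theory Num.Theory.
Import numFieldNormedType.Exports.

Set Implicit Arguments.
Unset Strict Implicit.
Unset Printing Implicit Defensive.

Local Open Scope ring_scope.
Local Open Scope classical_set_scope.

Notation Cplx R := (R[i] : numFieldType) (only parsing).

Section Hilbert.
Variable R : realType.
Variable V : completeNormedModType (Cplx R).

(* Together with completeness of V this makes V a complex Hilbert space. *)
Definition is_inner_product (ip : V -> V -> Cplx R) : Prop :=
  [/\ forall (a : Cplx R) (x y z : V), ip (a *: x + y) z = a * ip x z + ip y z,
      forall x y : V, ip y x = (ip x y)^*
    & forall x : V, `|x| ^+ 2 = ip x x].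

Definition bounded_op (A : V -> V) : Prop :=
  (forall (a : Cplx R) (x y : V), A (a *: x + y) = a *: A x + A y)
  /\ continuous A.

Definition left_invertible (A : V -> V) : Prop :=
  exists B : V -> V, bounded_op B /\ forall x, B (A x) = x.
Definition right_invertible (A : V -> V) : Prop :=
  exists B : V -> V, bounded_op B /\ forall x, A (B x) = x.
Definition invertible (A : V -> V) : Prop :=
  exists B : V -> V, bounded_op B /\ (forall x, B (A x) = x) /\ (forall x, A (B x) = x).

Definition shift_op (A : V -> V) (l : Cplx R) : V -> V := fun x => A x - l *: x.

Definition spectrum (A : V -> V) : set (Cplx R) :=
  [set l | ~ invertible (shift_op A l)].
Definition left_spectrum (A : V -> V) : set (Cplx R) :=
  [set l | ~ left_invertible (shift_op A l)].
Definition right_spectrum (A : V -> V) : set (Cplx R) :=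
  [set l | ~ right_invertible (shift_op A l)].
End Hilbert.

Definition boundary (R : realType) (S : set (Cplx R)) : set (Cplx R) :=
  closure S `\` interior S.

(* Riemann sphere: None stands for the point at infinity. *)
Definition sphere (R : realType) := option (Cplx R).

Definition phi (R : realType) (z : sphere R) : sphere R :=
  match z with
  | Some w => if w == 0 then None else Some w^-1
  | None => Some 0
  end.
Arguments phi {R} z.
Arguments boundary {R} S.

(* Main.v *)
Require Import Defs.
From mathcomp Require Import all_boot all_order all_algebra.
From mathcomp Require Import complex.
From mathcomp Require Import all_classical all_reals all_analysis.
From mathcomp.algebra_tactics Require Import ring.
Import Order.TTheory GRing.Theory Num.Theory.
Import numFieldNormedType.Exports.
Local Open Scope ring_scope.
Local Open Scope classical_set_scope.
Set Implicit Arguments.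
Unset Strict Implicit.
Unset Printing Implicit Defensive.

Section Ops.
Context (R : realType) (V : completeNormedModType (Cplx R)).
Implicit Types (A B : V -> V) (x y : V).

Definition islin A := forall (a : Cplx R) (x y : V), A (a *: x + y) = a *: A x + A y.

Lemma lin0 A : islin A -> A 0 = 0.
Proof.
move=> lA; have := lA 1 0 0; rewrite !scale1r addr0.
by move/(congr1 (fun v => v - A 0)); rewrite addrK subrr => <-.
Qed.

Lemma linD A : islin A -> forall x y, A (x + y) = A x + A y.
Proof. by move=> lA x y; rewrite -[x in LHS]scale1r lA !scale1r. Qed.

Lemma linZ A : islin A -> forall (a : Cplx R) x, A (a *: x) = a *: A x.
Proof. by move=> lA a x; rewrite -[_ *: x]addr0 lA lin0 // addr0. Qed.

Lemma linN A : islin A -> forall x, A (- x) = - A x.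
Proof. by move=> lA x; rewrite -scaleN1r linZ // scaleN1r. Qed.

Lemma linB A : islin A -> forall x y, A (x - y) = A x - A y.
Proof. by move=> lA x y; rewrite linD // linN. Qed.

Lemma bop_of_bound A (C : Cplx R) : islin A -> 0 < C ->
  (forall x, `|A x| <= C * `|x|) -> bounded_op A.
Proof.
move=> lA C0 hC; split; first exact: lA.
move=> x; apply/cvgrPdist_lt => e e0.
apply: filterS (nbhsx_ballx x (e / C) _); last by rewrite divr_gt0.
move=> z; rewrite -ball_normE /= => hz.
rewrite -linB //; apply: le_lt_trans (hC _) _.
by rewrite mulrC -ltr_pdivlMr.
Qed.

Lemma bop_bound A : bounded_op A ->
  exists2 C : Cplx R, 0 < C & forall x, `|A x| <= C * `|x|.
Proof.
case=> lA cA.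
have /cvgrPdist_lt/(_ 1 ltr01) := cA 0.
case/nbhs_ballP => d d0 hd.
exists (2 / d); first by rewrite divr_gt0.
move=> x; have [->|x0] := eqVneq x 0.
  by rewrite lin0 // !normr0 mulr0.
have nx : 0 < `|x| by rewrite normr_gt0.
pose t : Cplx R := d / (2 * `|x|).
have t0 : 0 < t by rewrite divr_gt0 // mulr_gt0.
have : ball 0 d (t *: x).
  rewrite -ball_normE /= sub0r normrN normrZ gtr0_norm //.
  have -> : t * `|x| = d / 2 by rewrite /t; field; rewrite gt_eqF.
  by rewrite ltr_pdivrMr // ltr_pMr // ltr1n.
move/hd; rewrite /= lin0 // sub0r normrN linZ // normrZ gtr0_norm // => h.
have -> : 2 / d * `|x| = t^-1 by rewrite /t; field; rewrite ?gt_eqF.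
by rewrite -(ler_pM2l t0) mulfV ?gt_eqF // ltW.
Qed.


Lemma bop_lin A : bounded_op A -> islin A. Proof. by case. Qed.

Lemma bop_comp A B : bounded_op A -> bounded_op B -> bounded_op (fun x => A (B x)).
Proof.
move=> hA hB; have [CA CA0 hCA] := bop_bound hA; have [CB CB0 hCB] := bop_bound hB.
apply: (@bop_of_bound _ (CA * CB)); last 2 first.
- by rewrite mulr_gt0.
- move=> x; apply: le_trans (hCA _) _; rewrite -mulrA ler_pM2l //; exact: hCB.
by move=> a x y; rewrite (bop_lin hB) (bop_lin hA).
Qed.

Lemma bop_add A B : bounded_op A -> bounded_op B -> bounded_op (fun x => A x + B x).
Proof.
move=> hA hB; have [CA CA0 hCA] := bop_bound hA; have [CB CB0 hCB] := bop_bound hB.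
apply: (@bop_of_bound _ (CA + CB)); last 2 first.
- by rewrite addr_gt0.
- move=> x; apply: le_trans (ler_normD _ _) _; rewrite mulrDl; exact: lerD.
by move=> a x y; rewrite (bop_lin hB) (bop_lin hA) scalerDr addrACA.
Qed.

Lemma bop_scale (c : Cplx R) A : bounded_op A -> bounded_op (fun x => c *: A x).
Proof.
move=> hA; have [CA CA0 hCA] := bop_bound hA.
apply: (@bop_of_bound _ ((`|c| + 1) * CA)); last 2 first.
- by rewrite mulr_gt0 // ltr_pwDr.
- by move=> x; rewrite normrZ -mulrA; apply: ler_pM; rewrite ?lerDl ?hCA.
by move=> a x y; rewrite (bop_lin hA) scalerDr !scalerA mulrC.
Qed.

Lemma bop_id : bounded_op (fun x => x).
Proof. by apply: (@bop_of_bound _ 1) => // x; rewrite mul1r. Qed.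

Lemma bop_shift A (l : Cplx R) : bounded_op A -> bounded_op (shift_op A l).
Proof.
move=> hA; have := bop_add hA (bop_scale (- l) bop_id).
by congr bounded_op; apply/funext => x; rewrite /shift_op scaleNr.
Qed.

Lemma shift_lin A (l : Cplx R) : bounded_op A -> islin (shift_op A l).
Proof. by move=> hA; apply: bop_lin; apply: bop_shift. Qed.


Lemma subDD (p q r s : V) : (p + q) - (r + s) = (p - r) + (q - s).
Proof. by rewrite opprD addrACA. Qed.

Lemma subBB (p q r s : V) : (p - q) - (r - s) = (p - r) - (q - s).
Proof. by rewrite subDD -opprD. Qed.

Lemma small_pow (c e : Cplx R) : 0 <= c -> 0 < e -> exists N : nat, c * 2^-1 ^+ N < e.
Proof.
move=> c0 e0.
have ce : 0 <= c / e by rewrite divr_ge0 // ltW.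
have hr := RRe_real (ger0_real ce).
have r0 : 0 <= complex.Re (c / e) by move: ce; rewrite -hr ler0c.
have hN := archi_boundP r0.
exists (Num.Def.archi_bound (complex.Re (c / e))).
have h1 : c / e < 2 ^+ (Num.Def.archi_bound (complex.Re (c / e))).
  rewrite -hr; apply: (lt_le_trans (y := (Num.Def.archi_bound (complex.Re (c / e)))%:R)).
    by rewrite -(rmorph_nat (real_complex R)) ltcR.
  by rewrite -natrX ler_nat ltnW // ltn_expl.
rewrite exprVn ltr_pdivrMr ?exprn_gt0 //.
by rewrite ltr_pdivrMr // mulrC in h1.
Qed.


Lemma half_gt0 : 0 < (2 : Cplx R)^-1. Proof. by rewrite invr_gt0. Qed.
Lemma two_neq0 : (2 : Cplx R) != 0. Proof. by rewrite pnatr_eq0. Qed.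

Lemma neumann_uniq A : bounded_op A -> (forall x, `|A x| <= 2^-1 * `|x|) ->
  forall z1 z2, z1 - A z1 = z2 - A z2 -> z1 = z2.
Proof.
move=> hA hc z1 z2 e; have lA := bop_lin hA.
have hw : (z1 - z2) - A (z1 - z2) = 0.
  by rewrite linB // subBB e subrr.
apply/eqP; rewrite -subr_eq0; apply/eqP.
move: hw; set w := z1 - z2 => /eqP; rewrite subr_eq0 => /eqP hw.
have [//|w0] := eqVneq w 0; exfalso.
have pw : 0 < `|w| by rewrite normr_gt0.
have h2 : 2^-1 * `|w| < `|w| by rewrite gtr_pMl // invf_lt1 // ltr1n.
by have := le_lt_trans (hc w) h2; rewrite -hw ltxx.
Qed.

Lemma neumann_ex A : bounded_op A -> (forall x, `|A x| <= 2^-1 * `|x|) ->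
  forall y, exists l, l - A l = y.
Proof.
move=> hA hc y; have lA := bop_lin hA.
pose f := fun v => y + A v.
pose xs n := iter n f 0.
have dx n : xs n.+1 - xs n = iter n A y.
  elim: n => [|n ih]; first by rewrite /xs /= /f lin0 // !addr0 subr0.
  rewrite iterS -ih linB //.
  change ((y + A (xs n.+1)) - (y + A (xs n)) = A (xs n.+1) - A (xs n)).
  by rewrite subDD subrr add0r.
have nb n : `|iter n A y| <= 2^-1 ^+ n * `|y|.
  elim: n => [|n ih]; first by rewrite expr0 mul1r.
  rewrite iterS exprS -mulrA; apply: le_trans (hc _) _.
  by rewrite ler_pM2l // half_gt0.
have cau n m : `|xs (n + m)%N - xs n| + 2 * 2^-1 ^+ (n + m) * `|y| <= 2 * 2^-1 ^+ n * `|y|.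
  elim: m => [|m ih]; first by rewrite addn0 subrr normr0 add0r.
  have e1 : 2 * 2^-1 ^+ (n + m.+1) * `|y| = 2^-1 ^+ (n + m) * `|y|.
    by rewrite addnS exprS mulrA mulfV ?two_neq0 // mul1r.
  rewrite e1; apply: le_trans ih.
  apply: le_trans (lerD (ler_distD (xs (n + m)%N) _ _) (lexx _)) _.
  rewrite addnS dx.
  set a := 2^-1 ^+ (n + m) * `|y|.
  have -> : 2 * 2^-1 ^+ (n + m) * `|y| = a + a by rewrite -mulrA mulr_natl mulr2n.
  rewrite [X in X + a <= _]addrC -addrA lerD2l lerD2r.
  exact: nb.
have bnd N n : (N <= n)%N -> `|xs n - xs N| <= 2 * 2^-1 ^+ N * `|y|.
  move=> /subnKC <-; apply: le_trans (cau N (n - N)%N).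
  by rewrite lerDl !mulr_ge0 // exprn_ge0 // ltW // half_gt0.
have cvx : cvgn xs.
  apply/cauchy_cvgP/cauchy_ballP => e e0.
  have [N hN] := @small_pow (4 * `|y|) e (mulr_ge0 (ler0n _ 4) (normr_ge0 _)) e0.
  near_simpl.
  exists ([set n | N <= n]%N, [set n | N <= n]%N); first by split; exists N.
  move=> [n m] [/= Nn Nm]; rewrite -ball_normE /=.
  apply: le_lt_trans (ler_distD (xs N) _ _) _.
  apply: le_lt_trans (lerD (bnd _ _ Nn) _) _.
    by rewrite distrC; apply: bnd.
  apply: le_lt_trans hN.
  by rewrite [leRHS](_ : _ = 2 * 2^-1 ^+ N * `|y| + 2 * 2^-1 ^+ N * `|y|) //; ring.
exists (lim (xs @ \oo)).
have h1 : (fun n => xs n.+1) @ \oo --> lim (xs @ \oo).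
  by have := cvx; rewrite -cvg_shiftS.
have h2 : (fun n => y + A (xs n)) @ \oo --> y + A (lim (xs @ \oo)).
  apply: cvgD; first exact: cvg_cst.
  exact: (continuous_cvg _ (hA.2 _) cvx).
have := cvg_unique (@norm_hausdorff _ V) h2 h1 => e.
by rewrite -[X in X - _ = _]e addrK.
Qed.


Lemma neumann A : bounded_op A -> (forall x, `|A x| <= 2^-1 * `|x|) ->
  exists B, [/\ bounded_op B, (forall y, B y - A (B y) = y),
     (forall x, B (x - A x) = x) & (forall y, `|B y| <= 2 * `|y|)].
Proof.
move=> hA hc; have lA := bop_lin hA.
pose B y := proj1_sig (cid (neumann_ex hA hc y)).
have hB y : B y - A (B y) = y := proj2_sig (cid (neumann_ex hA hc y)).
have un := neumann_uniq hA hc.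
have bB y : `|B y| <= 2 * `|y|.
  have e : B y = y + A (B y) by rewrite -{2}(hB y) subrK.
  have h : `|B y| <= `|y| + 2^-1 * `|B y|.
    by rewrite {1}e; apply: le_trans (ler_normD _ _) _; rewrite lerD2l hc.
  rewrite -lerBlDr in h.
  have e2 : `|B y| - 2^-1 * `|B y| = 2^-1 * `|B y| by field.
  rewrite e2 in h.
  by rewrite -(ler_pM2l half_gt0) mulrA mulVf ?two_neq0 // mul1r.
exists B; split => //.
- apply: (@bop_of_bound _ 2); [|by rewrite ltr0n|exact: bB].
  by move=> a x y; apply: un; rewrite hB linD // linZ // subDD -scalerBr !hB.
- by move=> x; apply: un; rewrite hB.
Qed.


Lemma shift_split A (w w' : Cplx R) x :
  shift_op A w' x = shift_op A w x - (w' - w) *: x.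
Proof. by rewrite /shift_op -addrA -opprD -scalerDl [w + _]addrC subrK. Qed.

Lemma small_op S (c M : Cplx R) : bounded_op S -> (forall y, `|S y| <= M * `|y|) ->
  `|c| * M <= (2^-1) -> bounded_op (fun x => c *: S x) /\
  (forall x, `|c *: S x| <= 2^-1 * `|x|).
Proof.
move=> hS hM hc; split; first exact: bop_scale.
move=> x; rewrite normrZ; apply: le_trans (_ : `|c| * (M * `|x|) <= _).
  by rewrite ler_wpM2l.
by rewrite mulrA ler_wpM2r.
Qed.

Lemma perturb_inv A (w w' : Cplx R) S (M : Cplx R) :
  bounded_op A -> bounded_op S -> (forall x, S (shift_op A w x) = x) ->
  (forall y, shift_op A w (S y) = y) ->
  (forall y, `|S y| <= M * `|y|) -> `|w - w'| * M <= 2^-1 ->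
  invertible (shift_op A w').
Proof.
move=> hA hS hl hr hM hc.
have lsh := shift_lin w hA.
have hc' : `|w' - w| * M <= 2^-1 by rewrite distrC.
have [hD hDc] := @small_op S (w' - w) M hS hM hc'.
have [P [hP hP1 hP2 _]] := neumann hD hDc.
have key x : shift_op A w' x = shift_op A w (x - (w' - w) *: S x).
  by rewrite linB // linZ // hr -shift_split.
exists (fun y => P (S y)); split; first exact: bop_comp.
split=> [x|y]; first by rewrite key hl hP2.
by rewrite key hP1 hr.
Qed.

Lemma perturb_rinv A (w w' : Cplx R) Rr (M : Cplx R) :
  bounded_op A -> bounded_op Rr -> (forall y, shift_op A w (Rr y) = y) ->
  (forall y, `|Rr y| <= M * `|y|) -> 0 <= M -> `|w - w'| * M <= 2^-1 ->
  exists R', [/\ bounded_op R', (forall y, shift_op A w' (R' y) = y) &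
     (forall y, `|R' y| <= 2 * M * `|y|)].
Proof.
move=> hA hR hr hM M0 hc.
have hc' : `|w' - w| * M <= 2^-1 by rewrite distrC.
have [hD hDc] := @small_op Rr (w' - w) M hR hM hc'.
have [P [hP hP1 hP2 hP3]] := neumann hD hDc.
exists (fun y => Rr (P y)); split; first exact: bop_comp.
  by move=> y; rewrite (shift_split _ w) hr hP1.
move=> y; apply: le_trans (hM _) _.
by rewrite (mulrC 2) -mulrA ler_wpM2l.
Qed.


Lemma inv_not_closure A (w : Cplx R) : bounded_op A ->
  invertible (shift_op A w) -> ~ closure (spectrum A) w.
Proof.
move=> hA [S [hS [hl hr]]]; have [M M0 hM] := bop_bound hS.
have r0 : 0 < 2^-1 / M :> Cplx R by rewrite divr_gt0 // half_gt0.
move=> /(_ (ball w (2^-1 / M)) (nbhsx_ballx w _ r0)) [w' [sw' bw']].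
apply: sw'; apply: (perturb_inv hA hS hl hr hM).
by move: bw'; rewrite -ball_normE /= ltr_pdivlMr // => /ltW.
Qed.

Lemma quarter_le_half : (4^-1 : Cplx R) <= 2^-1.
Proof. by rewrite lef_pV2 ?posrE ?ler_nat. Qed.

Lemma rinv_interior A (w : Cplx R) : bounded_op A ->
  right_invertible (shift_op A w) -> ~ interior (spectrum A) w ->
  invertible (shift_op A w).
Proof.
move=> hA [Rr [hR hr]] hint; have [M M0 hM] := bop_bound hR.
have [w' [hw' inv']] : exists w', `|w - w'| * M <= 4^-1 /\ invertible (shift_op A w').
  apply: contrapT => hn; apply: hint; apply/nbhs_ballP.
  exists (4^-1 / M); first by rewrite /= divr_gt0 // invr_gt0.
  move=> w' bw' hi; apply: hn; exists w'; split => //.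
  by move: bw'; rewrite -ball_normE /= ltr_pdivlMr // => /ltW.
have [R' [hR' hr' hM']] := perturb_rinv hA hR hr hM (ltW M0) (le_trans hw' quarter_le_half).
case: inv' => S [hS [hSl hSr]].
have SR y : S y = R' y by rewrite -{1}(hr' y) hSl.
have hSM y : `|S y| <= 2 * M * `|y| by rewrite SR.
apply: (perturb_inv hA hS hSl hSr hSM).
rewrite distrC mulrCA; apply: le_trans (ler_wpM2l _ hw') _; first by rewrite ler0n.
have -> : 2 * 4^-1 = 2^-1 :> Cplx R by field.
by [].
Qed.

Lemma key_shift A Bm (w : Cplx R) x : islin Bm -> (forall x, Bm (A x) = x) -> w != 0 ->
  shift_op Bm w x = - w *: Bm (shift_op A w^-1 x).
Proof.
move=> lB hBA w0.
rewrite /shift_op (linB lB) (linZ lB) hBA scalerBr scalerA mulNr mulfV //.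
by rewrite scaleN1r opprK addrC scaleNr.
Qed.

Lemma inv_swap A Bm (w : Cplx R) : bounded_op A -> bounded_op Bm ->
  (forall x, Bm (A x) = x) -> (forall x, A (Bm x) = x) -> w != 0 ->
  invertible (shift_op A w^-1) -> invertible (shift_op Bm w).
Proof.
move=> hA hB hBA hAB w0 [G [hG [hGl hGr]]].
have lB := bop_lin hB; have lA := bop_lin hA.
exists (fun y => G (A (- w^-1 *: y))); split.
  by apply: bop_comp => //; apply: bop_comp => //; apply: bop_scale; exact: bop_id.
split=> [x|y].
  by rewrite (key_shift _ lB hBA w0) scalerA mulrNN mulVf // scale1r hAB hGl.
by rewrite (key_shift _ lB hBA w0) hGr hBA scalerA mulrNN mulfV // scale1r.
Qed.

End Ops.

Lemma kerL (R : realType) (V : completeNormedModType (Cplx R)) (T L : V -> V) (HT : bounded_op T) (HL : bounded_op L) (HTl : left_invertible T) (HLT : forall x, L (T x) = x) : spectrum T 0 -> exists2 x0, x0 != 0 & L x0 = 0.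
Proof.
have lT := bop_lin HT; have lL := bop_lin HL.
have sh0 A : shift_op A 0 = A by apply/funext => x; rewrite /shift_op scale0r subr0.
move=> hs; apply: contrapT => hn; apply: hs; rewrite sh0.
exists L; split => //; split => // x.
have h : L (T (L x) - x) = 0 by rewrite (linB lL) HLT subrr.
apply/eqP; rewrite -subr_eq0; apply/negPn/negP => nz; apply: hn.
by exists (T (L x) - x).
Qed.

Lemma TLinvL (R : realType) (V : completeNormedModType (Cplx R)) (T L : V -> V) (HT : bounded_op T) (HL : bounded_op L) (HTl : left_invertible T) (HLT : forall x, L (T x) = x) : ~ spectrum T 0 -> forall y, T (L y) = y.
Proof.
have lT := bop_lin HT; have lL := bop_lin HL.
have sh0 A : shift_op A 0 = A by apply/funext => x; rewrite /shift_op scale0r subr0.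
move=> hs0; have [S [hS [hST hTS]]] : invertible T.
  by move: hs0; rewrite /spectrum /= sh0 => /contrapT.
by move=> y; rewrite -{1}(hTS y) HLT hTS.
Qed.

Lemma claim0L (R : realType) (V : completeNormedModType (Cplx R)) (T L : V -> V) (HT : bounded_op T) (HL : bounded_op L) (HTl : left_invertible T) (HLT : forall x, L (T x) = x) : ~ boundary (spectrum L) 0.
Proof.
have lT := bop_lin HT; have lL := bop_lin HL.
have sh0 A : shift_op A 0 = A by apply/funext => x; rewrite /shift_op scale0r subr0.
have ker := kerL HT HL HTl HLT.
have TLinv := TLinvL HT HL HTl HLT.
case: (pselect (spectrum T 0)) => hs.
- move=> [_ hint]; apply: hint.
  have [x0 x00 Lx0] := ker hs.
  have [C C0 hC] := bop_bound HT.
  apply/nbhs_ballP; exists (2^-1 / C); first by rewrite /= divr_gt0 // half_gt0.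
  move=> l; rewrite -ball_normE /= sub0r normrN ltr_pdivlMr // => /ltW hl.
  move=> [G [hG [hGl hGr]]].
  have [hD hDc] := small_op HT hC hl.
  have [P [hP hP1 hP2 _]] := neumann hD hDc.
  pose v := P x0.
  have ev : v = x0 + l *: T v by rewrite -(hP1 x0) subrK.
  have sv : shift_op L l v = 0.
    by rewrite /shift_op {1}ev (linD lL) (linZ lL) Lx0 HLT add0r subrr.
  have v0 : v = 0 by rewrite -(hGl v) sv (lin0 (bop_lin hG)).
  by move: x00; rewrite -(hP1 x0) -/v v0 (lin0 lT) scaler0 subr0 eqxx.
- move=> [hcl _]; apply: (inv_not_closure HL _ hcl); rewrite sh0.
  by exists T; split => //; split => // y; rewrite TLinv.
Qed.


Lemma part1 (R : realType) (V : completeNormedModType (Cplx R)) (T L : V -> V) (HT : bounded_op T) (HL : bounded_op L) (HTl : left_invertible T) (HLT : forall x, L (T x) = x) : (spectrum T 0 -> [set z : Cplx R | ~ (phi @` (Some @` left_spectrum L)) (Some z)] `<=` right_spectrum T `\` left_spectrum T).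
Proof.
have lT := bop_lin HT; have lL := bop_lin HL.
have sh0 A : shift_op A 0 = A by apply/funext => x; rewrite /shift_op scale0r subr0.
have ker := kerL HT HL HTl HLT.
have TLinv := TLinvL HT HL HTl HLT.
move=> hs z hz.
have [x0 x00 Lx0] := ker hs.
have [->|z0] := eqVneq z 0.
  split.
  + rewrite /right_spectrum /= sh0 => -[B [hB hTB]]; apply: hs; rewrite sh0.
    exists L; split => //; split => // x.
    have LB y : L y = B y by rewrite -{1}(hTB y) HLT.
    by rewrite LB hTB.
  + by rewrite /left_spectrum /= sh0.
have nl : ~ left_spectrum L z^-1.
  move=> hl; apply: hz; exists (Some z^-1); first by exists z^-1.
  by rewrite /= invr_eq0 (negbTE z0) invrK.
have [M [hM hMl]] : left_invertible (shift_op L z^-1) by apply: contrapT.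
have z0' : z^-1 != 0 by rewrite invr_eq0.
have key x : shift_op L z^-1 x = - z^-1 *: L (shift_op T z x).
  by rewrite (key_shift _ lL HLT z0') invrK.
split.
+ move=> [Rr [hR hTR]].
  have sv : shift_op L z^-1 (Rr x0) = 0 by rewrite key hTR Lx0 scaler0.
  have v0 : Rr x0 = 0 by rewrite -(hMl (Rr x0)) sv (lin0 (bop_lin hM)).
  by move: x00; rewrite -(hTR x0) v0 (lin0 (shift_lin z HT)) eqxx.
+ move=> hl; apply: hl.
  exists (fun y => M (- z^-1 *: L y)); split.
    by apply: bop_comp => //; apply: bop_scale.
  by move=> x; rewrite -key hMl.
Qed.

Lemma part2 (R : realType) (V : completeNormedModType (Cplx R)) (T L : V -> V) (HT : bounded_op T) (HL : bounded_op L) (HTl : left_invertible T) (HLT : forall x, L (T x) = x) : (~ spectrum T 0 -> phi @` (Some @` spectrum L) = Some @` spectrum T).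
Proof.
have lT := bop_lin HT; have lL := bop_lin HL.
have sh0 A : shift_op A 0 = A by apply/funext => x; rewrite /shift_op scale0r subr0.
have ker := kerL HT HL HTl HLT.
have TLinv := TLinvL HT HL HTl HLT.
move=> hs0; have TL := TLinv hs0.
have linv : invertible L by exists T; split => //; split.
have tinv : invertible T by exists L; split => //; split.
apply/seteqP; split.
- move=> _ [_ [w hw <-] <-].
  have w0 : w != 0 by apply/eqP => w0; move: hw; rewrite w0 /spectrum /= sh0.
  rewrite /= (negbTE w0); exists w^-1 => //.
  by move=> hi; apply: hw; apply: (inv_swap HT HL HLT TL w0 hi).
- move=> _ [v hv <-].
  have v0 : v != 0 by apply/eqP => v0; move: hv; rewrite v0 /spectrum /= sh0.
  have v0' : v^-1 != 0 by rewrite invr_eq0.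
  exists (Some v^-1); last by rewrite /= (negbTE v0') invrK.
  exists v^-1 => //.
  by move=> hi; apply: hv; apply: (inv_swap HL HT TL HLT v0 hi).
Qed.


Lemma part4 (R : realType) (V : completeNormedModType (Cplx R))
    (T L : V -> V) (HT : bounded_op T) (HL : bounded_op L)
    (HLT : forall x, L (T x) = x) (claim0 : ~ boundary (spectrum L) 0) :
  phi @` (Some @` boundary (spectrum L)) `<=` Some @` right_spectrum T.
Proof.
have lL := bop_lin HL.
move=> _ [_ [w hw <-] <-].
have w0 : w != 0 by apply/eqP => w0; apply: claim0; rewrite -w0.
rewrite /= (negbTE w0); exists w^-1; last by [].
move=> [Rr [hR hTR]].
have rinv : right_invertible (shift_op L w).
  exists (fun y => Rr (T (- w^-1 *: y))); split.
    apply: bop_comp; first exact: hR.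
    apply: bop_comp; first exact: HT.
    apply: bop_scale; exact: bop_id.
  move=> y; rewrite (key_shift _ lL HLT w0) hTR HLT scalerA mulrNN (mulfV w0).
  by rewrite scale1r.
case: hw => hcl hint.
have hi := @rinv_interior R V L w HL rinv hint.
exact: (@inv_not_closure R V L w HL hi hcl).
Qed.


Theorem theorem4p1 (R : realType) (V : completeNormedModType (Cplx R))
    (ip : V -> V -> Cplx R) (Hip : is_inner_product ip)
    (T L : V -> V) (HT : bounded_op T) (HL : bounded_op L)
    (HTl : left_invertible T) (HLT : forall x, L (T x) = x) :
  (spectrum T 0 ->
     [set z : Cplx R | ~ (phi @` (Some @` left_spectrum L)) (Some z)]
       `<=` right_spectrum T `\` left_spectrum T)
  /\ (~ spectrum T 0 ->
        phi @` (Some @` spectrum L) = Some @` spectrum T)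
  /\ ~ boundary (spectrum L) 0
  /\ phi @` (Some @` boundary (spectrum L)) `<=` Some @` right_spectrum T.
Proof.
have c0 := claim0L HT HL HTl HLT.
split; first exact: (part1 HT HL HTl HLT).
split; first exact: (part2 HT HL HTl HLT).
split; first exact: c0.
exact: (part4 HT HL HLT c0).
Qed.
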